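(* Let $X_1, \dots, X_n$ be independent, identically distributed random variables taking values in $[0, \infty)$, with common distribution function $F$. Suppose that (1) $F$ has a continuous density $f$ in a neighborhood of $0$ which is nonvanishing there (in particular $f(0) \neq 0$), and (2) $1 - F \in L^p([0, \infty))$ for some $p > 0$. Then, as $n \to \infty$, \[ \mathbb{E}\big(\min(X_1, \dots, X_n)\big) \sim \frac{1}{f(0)(n+1)}. \]
   Context: $a_n \sim b_n$ means $a_n / b_n \to 1$ as $n \to \infty$. *)

(* Defs.v *)
From HB Require Import structures.
From mathcomp Require Import all_boot all_order all_algebra.
From mathcomp Require Import all_classical all_reals all_analysis.
Set Implicit Arguments. Unset Strict Implicit. Unset Printing Implicit Defensive.
Import Order.TTheory GRing.Theory Num.Theory.
Import numFieldNormedType.Exports.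
Local Open Scope classical_set_scope.
Local Open Scope ring_scope.

(* Mutual independence of a finite family of real random variables:
   the product rule for preimages of arbitrary Borel sets (taking B i = setT
   for the indices not in a subfamily recovers the rule for every subfamily). *)
Definition mutually_independent {d} {T : measurableType d} {R : realType}
  (P : probability T R) (n : nat) (X : 'I_n -> T -> R) : Prop :=
  forall B : 'I_n -> set R, (forall i, measurable (B i)) ->
    P (\bigcap_(i in [set: 'I_n]) (X i @^-1` B i)) =
    (\prod_(i < n) P (X i @^-1` B i))%E.

(* Expectation of min(X_1,...,X_n), computed in the extended reals
   (the empty minimum, n = 0, is +oo). *)
Definition expect_min {d} {T : measurableType d} {R : realType}
  (P : probability T R) (n : nat) (X : 'I_n -> T -> R) : \bar R :=
  (\int[P]_w (\big[Order.min/+oo%E]_(i < n) (X i w)%:E))%E.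

(* Main.v *)
Require Import Defs.
From HB Require Import structures.
From mathcomp Require Import all_boot all_order all_algebra.
From mathcomp Require Import all_classical all_reals all_analysis.
From mathcomp Require Import ring lra measurable_realfun.
Import Order.TTheory GRing.Theory Num.Theory.
Import numFieldNormedType.Exports.
Local Open Scope classical_set_scope.
Local Open Scope ring_scope.

Section prob.
Context {R : realType} {d : measure_display} {T : measurableType d} (P : probability T R).
Local Open Scope ereal_scope.

Lemma expect_min_ccdf (n : nat) (X : 'I_n -> {mfun T >-> R}) (F : R -> R) :
  (0 < n)%N ->
  mutually_independent P (fun i => (X i : T -> R)) ->
  (forall i w, 0 <= X i w)%R ->
  (forall i x, P [set w | (X i w <= x)%R] = (F x)%:E) ->
  expect_min P (fun i => (X i : T -> R)) =
  \int[lebesgue_measure]_(x in `[0%R, +oo[) ((1 - F x) ^+ n)%:E.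
Proof.
move=> n0 indep X0 XF.
pose g : T -> \bar R := fun w => \big[Order.min/+oo]_(i < n) (X i w)%:E.
have g0 w : 0 <= g w by apply: le_bigmin => // i _; rewrite lee_fin.
have gfin w : g w \is a fin_num.
  rewrite ge0_fin_numE //; apply: (le_lt_trans (bigmin_le _ (Ordinal n0) _)).
  by rewrite ltry.
have mg : measurable_fun setT g.
  have : forall s : seq 'I_n,
      measurable_fun setT (fun w => \big[Order.min/+oo]_(i <- s) (X i w)%:E).
    elim => [|i s IH].
      by under eq_fun do rewrite big_nil; exact: measurable_cst.
    under eq_fun do rewrite big_cons.
    by apply: measurable_mine => //; exact/measurable_EFinP.
  by apply.
have mY : measurable_fun setT (fine \o g).
  by apply: measurableT_comp => //; exact: fine_measurable.
have mYin : (fine \o g) \in mfun by rewrite inE.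
pose Y : {mfun T >-> R} := mfun_Sub mYin.
have YE w : Y w = fine (g w) by [].
rewrite /expect_min.
transitivity ('E_P[Y]).
  rewrite expectation_def; apply: eq_integral => w _.
  by rewrite YE fineK.
rewrite ge0_expectation_ccdf; last by move=> w; rewrite YE fine_ge0.
apply: eq_integral => r _.
rewrite /ccdf /distribution /pushforward.
have -> : Y @^-1` `]r, +oo[ = \bigcap_(i in [set: 'I_n]) ((X i : T -> R) @^-1` `]r, +oo[).
  apply/seteqP; split => w /=; rewrite ?YE.
    rewrite in_itv /= andbT => rw i _ /=.
    rewrite in_itv /= andbT.
    have h : g w <= (X i w)%:E := bigmin_le _ i _.
    by move: h; rewrite -(fineK (gfin w)) lee_fin; exact: lt_le_trans rw.
  move=> H; rewrite in_itv /= andbT -lte_fin fineK //.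
  apply: lt_bigmin; first by rewrite ltry.
  by move=> i _; have := H i I; rewrite /= in_itv /= andbT lte_fin.
rewrite indep; last by move=> i; exact: measurable_itv.
rewrite (eq_bigr (fun=> (1 - F r)%:E)); last first.
  move=> i _ /=.
  have -> : (X i : T -> R) @^-1` `]r, +oo[ = ~` [set w | (X i w <= r)%R].
    by apply/seteqP; split => w /=; rewrite in_itv /= andbT ltNge => /negP.
  rewrite probability_setC; first by rewrite XF EFinB.
  have -> : [set w | (X i w <= r)%R] = (X i : T -> R) @^-1` `]-oo, r] .
    by apply/seteqP; split => w /=; rewrite in_itv.
  exact: measurable_funPTI.
by rewrite prodEFin prodr_const card_ord.
Qed.
End prob.

Section ana.
Context {R : realType}.
Local Notation mu := lebesgue_measure.


Lemma cont_onembx (b : R) n : continuous (fun x : R => (1 - b * x) ^+ n).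
Proof.
move=> x.
apply: (@continuous_comp _ _ _ (fun x : R => 1 - b * x) (fun x : R => x ^+ n)).
  apply: cvgB; first exact: cvg_cst.
  by apply: cvgM; [exact: cvg_cst|exact: cvg_id].
exact: exprn_continuous.
Qed.

Lemma int_onembx (b eta : R) (n : nat) : 0 < b -> 0 < eta ->
  (\int[mu]_(x in `[0%R, eta]) ((1 - b * x) ^+ n)%:E =
  ((1 - (1 - b * eta) ^+ n.+1) / (b * n.+1%:R))%:E)%E.
Proof.
move=> b0 eta0.
pose c : R := (- (b * n.+1%:R))^-1.
pose h : R -> R := (cst 1 - ( *:%R b))%R.
have hE y : h y = 1 - b * y by [].
pose G : R -> R := (h ^+ n.+1 * cst c)%R.
have GE y : G y = (1 - b * y) ^+ n.+1 * c.
  by rewrite /G /= exprfctE.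
have dG (x : R) : is_derive x (1 : R) G ((1 - b * x) ^+ n).
  rewrite /G; apply: is_derive_eq.
  rewrite scaler0 add0r /= hE /cst /c.
  rewrite -[b%:A]/(b * 1).
  change ((- (b * n.+1%:R))^-1 * ((n.+1%:R * (1 - b * x) ^+ n) * (0 - b * 1)) = (1 - b * x) ^+ n).
  by field; apply/andP; split; apply: lt0r_neq0.
have Gf : G = (fun y => (1 - b * y) ^+ n.+1 * c) by apply/funext => y; rewrite GE.
have cG : continuous G.
  rewrite Gf => x; apply: cvgM; last exact: cvg_cst.
  exact: cont_onembx.
rewrite (@continuous_FTC2 _ _ G 0 eta) //.
- rewrite !GE mulr0 subr0 expr1n /c; congr (_%:E).
  by field; apply/andP; split; apply: lt0r_neq0.
- by apply: continuous_in_subspaceT => x _; exact: cont_onembx.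
- split.
  + by move=> x _; have := dG x; case.
  + by apply: cvg_at_right_filter; exact: cG.
  + by apply: cvg_at_left_filter; exact: cG.
- by move=> x _; rewrite derive1E; exact: derive_val.
Qed.


Lemma int_cst_itv (k x : R) : 0 <= x ->
  (\int[mu]_(t in `[0%R, x]) k%:E = (k * x)%:E)%E.
Proof.
move=> x0.
have := integral_cst mu (measurable_itv `[0%R, x]) k%:E.
rewrite /cst => ->; have := (@lebesgue_measure_itv R `[0%R, x]); rewrite /= lte_fin => ->.
case: (ltgtP 0 x) x0 => // [x0' _| <- _]; first by rewrite sube0 EFinM.
by rewrite mulr0 mule0.
Qed.

Lemma F_local (F f : R -> R) (delta : R) :
  0 < delta -> {within `[0, delta], continuous f} ->
  (forall x, x \in `[0, delta] ->
     (F x)%:E = (\int[mu]_(t in `[0%R, x]) (f t)%:E)%E) ->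
  forall e, 0 < e -> exists2 eta, 0 < eta <= delta & forall x, 0 <= x <= eta ->
     (f 0 - e) * x <= F x <= (f 0 + e) * x.
Proof.
move=> d0 cf Fint e e0.
have [_ cf0 _] := (continuous_within_itvP f d0).1 cf.
have [E /= E0 HE] := (nbhs_ballP _ _).1 ((cvgrPdist_le _ _).1 cf0 e e0).
pose eta := Num.min delta (E / 2).
have eta0 : 0 < eta by rewrite lt_min d0 divr_gt0.
have etad : eta <= delta by rewrite ge_min lexx.
have etaE : eta < E by rewrite gt_min; apply/orP; right; rewrite ltr_pdivrMr //; lra.
have fb t : 0 <= t <= eta -> f 0 - e <= f t <= f 0 + e.
  case/andP => t0 teta.
  have : `|f 0 - f t| <= e.
    case: (ltgtP 0 t) t0 => // [tpos _|<- _]; last by rewrite subrr normr0 ltW.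
    apply: HE => //; rewrite /ball /=. 
    rewrite sub0r normrN ger0_norm ?ltW //; lra.
  rewrite ler_norml; move=> /andP [h1 h2]; apply/andP; split; lra.
exists eta; first by rewrite eta0 etad.
move=> x /andP [x0 xeta].
have xd : x \in `[0, delta] by rewrite in_itv /= x0 /=; lra.
have sub : `[0%R, x] `<=` `[0%R, delta].
  by apply: subset_itvl; rewrite bnd_simp; lra.
have intf : mu.-integrable `[0%R, x] (EFin \o f).
  apply: continuous_compact_integrable; first exact: segment_compact.
  exact: continuous_subspaceW cf.
have intc k : mu.-integrable `[0%R, x] (EFin \o cst k).
  apply: continuous_compact_integrable; first exact: segment_compact.
  by apply: continuous_subspaceT => ?; exact: cst_continuous.
have Fx := Fint x xd.
apply/andP; split; rewrite -lee_fin Fx -int_cst_itv //.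
  apply: le_integral => //; first exact: intc.
  move=> t; rewrite inE /= in_itv /= => /andP [t0 tx].
  have /andP [h1 h2] : f 0 - e <= f t <= f 0 + e by apply: fb; apply/andP; split => //; lra.
  by rewrite /= lee_fin.
apply: le_integral => //; first exact: intc.
move=> t; rewrite inE /= in_itv /= => /andP [t0 tx].
have /andP [h1 h2] : f 0 - e <= f t <= f 0 + e by apply: fb; apply/andP; split => //; lra.
by rewrite /= lee_fin.
Qed.


Lemma bernoulli_ineq (t : R) n : 0 <= t -> 1 + n%:R * t <= (1 + t) ^+ n.
Proof.
move=> t0; elim: n => [|n IH]; first by rewrite mul0r addr0 expr0.
rewrite exprS -natr1.
have h1 : 0 <= (1 + t) ^+ n by apply: exprn_ge0; lra.
have h2 : 0 <= n%:R * t by rewrite mulr_ge0.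
nra.
Qed.

Lemma nexpr_bound (s : R) n : 0 < s < 1 -> n.+1%:R * s ^+ n <= (s^-1 - 1)^-1 + 1.
Proof.
case/andP => s0 s1.
set t := s^-1 - 1.
have t0 : 0 < t by rewrite /t subr_gt0 invf_gt1.
have sn0 : 0 < s ^+ n by exact: exprn_gt0.
have Hb := @bernoulli_ineq t n (ltW t0).
have e1 : (1 + t) ^+ n * s ^+ n = 1.
  by rewrite -exprMn /t addrC subrK mulVf ?expr1n // gt_eqF.
have h : n%:R * t * s ^+ n <= 1.
  have : (1 + n%:R * t) * s ^+ n <= (1 + t) ^+ n * s ^+ n.
    by apply: ler_wpM2r => //; exact: ltW.
  rewrite e1; nra.
have h' : n%:R * s ^+ n <= t^-1.
  rewrite -(ler_pM2r t0) mulVf ?gt_eqF //; nra.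
have sn1 : s ^+ n <= 1 by apply: exprn_ile1; exact: ltW.
rewrite -natr1 mulrDl mul1r; lra.
Qed.

Lemma nexpr_near (r : R) (k : nat) (e : R) : 0 < r < 1 -> 0 < e ->
  \forall n \near \oo, n.+1%:R * r ^+ (n - k) <= e.
Proof.
case/andP => r0 r1 e0.
set s := Num.sqrt r.
have s0 : 0 < s by rewrite sqrtr_gt0.
have ss : s ^+ 2 = r by rewrite sqr_sqrtr // ltW.
have s1 : s < 1 by move: ss; rewrite expr2 => ss; nra.
set M := (s^-1 - 1)^-1 + 1.
have M0 : 0 < M.
  rewrite /M; have : 0 < s^-1 - 1 by rewrite subr_gt0 invf_gt1.
  move=> h; have := invr_gt0 (s^-1 - 1); rewrite h => /esym h'; lra.
have rk0 : 0 < r ^+ k by exact: exprn_gt0.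
pose e' := e * r ^+ k / M.
have e'0 : 0 < e' by rewrite /e' divr_gt0 // mulr_gt0.
have s1' : `|s| < 1 by rewrite ger0_norm // ltW.
have := (cvgrPdist_le _ _).1 (cvg_expr s1') e' e'0.
move=> H.
near=> n.
have kn : (k <= n)%N by near: n; exact: nbhs_infty_ge.
have Hn : `|0 - s ^+ n| <= e' by near: n; exact: H.
move: Hn; rewrite sub0r normrN ger0_norm; last by apply: exprn_ge0; exact: ltW.
move=> Hn.
rewrite exprB //; last by rewrite unitfE gt_eqF.
have hb : n.+1%:R * s ^+ n <= M by apply: nexpr_bound; rewrite s0 s1.
have Hn' : s ^+ n * M <= e * r ^+ k by rewrite -ler_pdivlMr.
have sn0 : 0 <= s ^+ n by apply: exprn_ge0; exact: ltW.
have -> : r ^+ n = s ^+ n * s ^+ n by rewrite -ss -exprM mulnC exprM expr2.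
rewrite mulrA ler_pdivrMr //.
set a := s ^+ n in Hn' sn0 hb *.
set b := n.+1%:R * a in hb *.
have -> : n.+1%:R * (a * a) = b * a by rewrite /b mulrA.
by apply: (le_trans (ler_wpM2r sn0 hb)); rewrite mulrC; exact: Hn'.
Unshelve. all: end_near.
Qed.


Lemma lerXn (x y : R) n : 0 <= x -> x <= y -> x ^+ n <= y ^+ n.
Proof.
move=> x0 xy; apply: lerXn2r => //; rewrite nnegrE; lra.
Qed.

Lemma pow_tail (G r p : R) (n k : nat) : 0 <= G <= r -> r <= 1 -> 0 < p ->
  p <= k%:R -> (0 < k)%N -> (k <= n)%N -> G ^+ n <= r ^+ (n - k) * `|G| `^ p.
Proof.
move=> /andP [G0 Gr] r1 p0 pk k0 kn.
have -> : G ^+ n = G ^+ (n - k) * G ^+ k by rewrite -exprD subnK.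
apply: ler_pM; [exact: exprn_ge0|exact: exprn_ge0|exact: lerXn|].
rewrite ger0_norm //.
case: (ltgtP 0 G) G0 => // [Gpos _|<- _]; last first.
  by rewrite expr0n gtn_eqF // powR_ge0.
rewrite -powR_mulrn; last exact: ltW.
have -> : k%:R = p + (k%:R - p) by rewrite addrC subrK.
rewrite powRD; last by apply/implyP => _; rewrite gt_eqF.
rewrite -[X in _ <= X]mulr1; apply: ler_wpM2l; first exact: powR_ge0.
have : G `^ (k%:R - p) <= 1 `^ (k%:R - p).
  apply: ge0_ler_powR; rewrite ?nnegrE; lra.
by rewrite powR1.
Qed.
Lemma meas_onemF (F : R -> R) (D : set R) : measurable D -> {homo F : x y / x <= y} ->
  measurable_fun D (fun x => 1 - F x).
Proof.
move=> mD Fm; apply: nonincreasing_measurable => // x y xy.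
by rewrite lerD2l lerN2; exact: Fm.
Qed.

Lemma meas_pow (F : R -> R) (D : set R) n : measurable D -> {homo F : x y / x <= y} ->
  measurable_fun D (fun x => ((1 - F x) ^+ n)%:E).
Proof.
move=> mD Fm; apply/measurable_EFinP; apply: measurable_funX.
exact: meas_onemF.
Qed.

Lemma I_lower (F : R -> R) (b eta : R) n :
  (forall x, 0 <= F x <= 1) -> {homo F : x y / x <= y} ->
  0 < b -> 0 < eta -> b * eta <= 1 -> (forall x, 0 <= x <= eta -> F x <= b * x) ->
  (((1 - (1 - b * eta) ^+ n.+1) / (b * n.+1%:R))%:E <=
   \int[mu]_(x in `[0%R, +oo[) ((1 - F x) ^+ n)%:E)%E.
Proof.
move=> F01 Fm b0 eta0 beta Fb.
rewrite -int_onembx //.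
apply: (@le_trans _ _ (\int[mu]_(x in `[0%R, eta]) ((1 - F x) ^+ n)%:E)%E).
  apply: ge0_le_integral => //.
  - move=> x; rewrite /= in_itv /= => /andP [x0 xe]; rewrite lee_fin.
    by apply: exprn_ge0; nra.
  - apply/measurable_EFinP.
    apply: measurable_funS (continuous_measurable_fun (cont_onembx b n)) => //.
  - exact: meas_pow.
  - move=> x; rewrite /= in_itv /= => /andP [x0 xe]; rewrite lee_fin.
    apply: lerXn; first nra.
    have := Fb x; rewrite x0 xe => /(_ isT); lra.
apply: ge0_subset_integral => //.
- exact: meas_pow.
- by move=> x _; rewrite lee_fin; apply: exprn_ge0; have := F01 x; lra.
- by move=> x /=; rewrite !in_itv /= => /andP [-> _].
Qed.

Lemma meas_powp (F : R -> R) (D : set R) (p : R) : measurable D -> {homo F : x y / x <= y} ->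
  measurable_fun D (fun x => (`|1 - F x| `^ p)%:E).
Proof.
move=> mD Fm; apply/measurable_EFinP.
apply: (@measurableT_comp _ _ _ _ _ _ (fun y : R => y `^ p)); first exact: measurable_powR.
apply: (@measurableT_comp _ _ _ _ _ _ (@Num.norm _ R)); first exact: normr_measurable.
exact: meas_onemF.
Qed.

Lemma I_upper (F : R -> R) (b eta p : R) (k n : nat) :
  (forall x, 0 <= F x <= 1) -> {homo F : x y / x <= y} ->
  0 < b -> 0 < eta -> b * eta < 1 -> (forall x, 0 <= x <= eta -> b * x <= F x) ->
  0 < p -> p <= k%:R -> (0 < k)%N -> (k <= n)%N ->
  (\int[mu]_(x in `[0%R, +oo[) ((1 - F x) ^+ n)%:E <=
   ((b * n.+1%:R)^-1)%:E + ((1 - b * eta) ^+ (n - k))%:E *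
      \int[mu]_(x in `[0%R, +oo[) ((`|1 - F x| `^ p)%:E))%E.
Proof.
move=> F01 Fm b0 eta0 beta Fb p0 pk k0 kn.
have sp : `[0%R, +oo[%classic = `[0%R, eta]%classic `|` `]eta, +oo[%classic :> set R.
  by apply: itv_bndbnd_setU; rewrite bnd_simp //; exact: ltW.
rewrite sp ge0_integral_setU //; first last.
- by apply/disj_setPS => x [] /=; rewrite !in_itv /= => /andP [_ h1] /andP [h2 _]; lra.
- by move=> x _; rewrite lee_fin; apply: exprn_ge0; have := F01 x; lra.
- by rewrite -sp; exact: meas_pow.
apply: leeD.
  apply: (@le_trans _ _ (\int[mu]_(x in `[0%R, eta]) ((1 - b * x) ^+ n)%:E)%E).
    apply: ge0_le_integral => //.
    - by move=> x _; rewrite lee_fin; apply: exprn_ge0; have := F01 x; lra.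
    - exact: meas_pow.
    - apply/measurable_EFinP.
      apply: measurable_funS (continuous_measurable_fun (cont_onembx b n)) => //.
    - move=> x; rewrite /= in_itv /= => /andP [x0 xe]; rewrite lee_fin.
      have := Fb x; rewrite x0 xe => /(_ isT) h.
      apply: lerXn; have := F01 x; lra.
  rewrite int_onembx // lee_fin.
  have h0 : 0 <= (1 - b * eta) ^+ n.+1 by apply: exprn_ge0; nra.
  rewrite -[X in _ <= X]mul1r; apply: ler_wpM2r; last lra.
  by rewrite invr_ge0 mulr_ge0 // ltW.
have r0 : 0 <= (1 - b * eta) ^+ (n - k) by apply: exprn_ge0; lra.
apply: (@le_trans _ _ (\int[mu]_(x in `]eta, +oo[)
    (((1 - b * eta) ^+ (n - k))%:E * (`|1 - F x| `^ p)%:E))%E).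
  apply: ge0_le_integral => //.
  - by move=> x _; rewrite lee_fin; apply: exprn_ge0; have := F01 x; lra.
  - exact: meas_pow.
  - by apply: emeasurable_funM; [exact: measurable_cst | exact: meas_powp].
  - move=> x; rewrite /= in_itv /= andbT => xe; rewrite -EFinM lee_fin.
    apply: pow_tail => //; last by nra.
    have := Fb eta; rewrite lexx ltW // => /(_ isT) h.
    have := Fm _ _ (ltW xe); have := F01 x; lra.
rewrite (ge0_integralZl_EFin mu _ (f1 := fun x => (`|1 - F x| `^ p)%:E)) //;
  last exact: meas_powp.
rewrite -sp; apply: lee_wpmul2l; first by rewrite lee_fin.
apply: ge0_subset_integral => //.
- exact: meas_powp.
- by move=> x /=; rewrite !in_itv /= !andbT => h; lra.
Qed.
Lemma final_arith (u m e eps Q T : R) : 0 < m -> 0 < eps <= 1/2 -> eps <= e / 4 ->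
  0 <= Q <= e / 4 -> 0 <= T <= e / 2 ->
  1 - Q <= u * ((1 + eps) * m) ->
  u * ((1 - eps) * m) <= 1 + T * (1 - eps) ->
  `|1 - u / (1 / m)| <= e.
Proof.
move=> m0 /andP [eps0 eps1] epse /andP [Q0 Qe] /andP [T0 Te] H1 H2.
rewrite div1r invrK.
set v := u * m.
have E1 : u * ((1 + eps) * m) = v * (1 + eps) by rewrite /v; ring.
have E2 : u * ((1 - eps) * m) = v * (1 - eps) by rewrite /v; ring.
rewrite E1 in H1; rewrite E2 in H2.
have lo : 1 - e / 2 <= v by nra.
have hi : v <= 1 + e by nra.
rewrite ler_norml; apply/andP; split; lra.
Qed.

Lemma I_bounds (F : R -> R) (c delta p : R) (k : nat) (Jp : \bar R) :
  (forall x, 0 <= F x <= 1) -> {homo F : x y / x <= y} -> 0 < c ->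
  (forall e, 0 < e -> exists2 eta, 0 < eta <= delta & forall x, 0 <= x <= eta ->
     (c - e) * x <= F x <= (c + e) * x) ->
  0 < p -> p <= k%:R -> (0 < k)%N ->
  Jp = (\int[mu]_(x in `[0%R, +oo[) ((`|1 - F x| `^ p)%:E))%E ->
  (Jp < +oo)%E ->
  forall eps, 0 < eps <= 1/2 ->
  exists q, exists r, [/\ 0 <= q < 1, 0 < r < 1 &
   forall n, (k <= n)%N ->
     [/\ (\int[mu]_(x in `[0%R, +oo[) ((1 - F x) ^+ n)%:E)%E \is a fin_num,
         1 - q ^+ n.+1 <= fine (\int[mu]_(x in `[0%R, +oo[) ((1 - F x) ^+ n)%:E)%E
                          * ((1 + eps) * (c * n.+1%:R)) &
         fine (\int[mu]_(x in `[0%R, +oo[) ((1 - F x) ^+ n)%:E)%E * ((1 - eps) * (c * n.+1%:R))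
           <= 1 + r ^+ (n - k) * fine Jp * (c * n.+1%:R) * (1 - eps)]].
Proof.
move=> F01 Fm c0 Floc p0 pk k0 JpE Jfin eps /andP [e0 e1].
have [eta /andP [eta0 _] Heta] := Floc (eps * c) (mulr_gt0 e0 c0).
pose b := (1 + eps) * c.
pose b' := (1 - eps) * c.
have b0 : 0 < b by rewrite /b mulr_gt0 //; lra.
have b'0 : 0 < b' by rewrite /b' mulr_gt0 //; lra.
have bb' : b' < b by rewrite /b /b'; nra.
pose eta' := Num.min eta (2 * b)^-1.
have eta'0 : 0 < eta' by rewrite lt_min eta0 invr_gt0 mulr_gt0.
have eta'le : eta' <= eta by rewrite ge_min lexx.
have beta' : b * eta' <= 1/2.
  have h : eta' <= (2 * b)^-1 by rewrite ge_min lexx orbT.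
  have h2 : b * eta' <= b * (2 * b)^-1 by rewrite ler_pM2l.
  have -> : 1 / 2 = b * (2 * b)^-1 by field; rewrite gt_eqF.
  exact: h2.
have Fup x : 0 <= x <= eta' -> F x <= b * x.
  case/andP => x0 xe; have := Heta x; rewrite x0 (le_trans xe eta'le) => /(_ isT).
  move=> /andP [_ h].
  have -> : b * x = (c + eps * c) * x by rewrite /b; ring.
  exact: h.
have Flo x : 0 <= x <= eta' -> b' * x <= F x.
  case/andP => x0 xe; have := Heta x; rewrite x0 (le_trans xe eta'le) => /(_ isT).
  move=> /andP [h _].
  have -> : b' * x = (c - eps * c) * x by rewrite /b'; ring.
  exact: h.
have b'eta : 0 < b' * eta' by rewrite mulr_gt0.
have b'eta1 : b' * eta' < b * eta' by rewrite ltr_pM2r.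
exists (1 - b * eta'), (1 - b' * eta'); split.
- by apply/andP; split; nra.
- by apply/andP; split; lra.
move=> n kn.
set I := (\int[mu]_(x in `[0%R, +oo[) ((1 - F x) ^+ n)%:E)%E.
have Ige0 : (0 <= I)%E.
  by apply: integral_ge0 => x _; rewrite lee_fin; apply: exprn_ge0; have := F01 x; lra.
have Jge0 : (0 <= Jp)%E by rewrite JpE; apply: integral_ge0 => x _; rewrite lee_fin powR_ge0.
have Jfin' : Jp \is a fin_num by rewrite ge0_fin_numE.
have Iup := @I_upper F b' eta' p k n F01 Fm b'0 eta'0 ltac:(lra) Flo p0 pk k0 kn.
rewrite -JpE -(fineK Jfin') -EFinM -EFinD in Iup.
have Ilo := @I_lower F b eta' n F01 Fm b0 eta'0 ltac:(lra) Fup.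
have Ifin : I \is a fin_num.
  by rewrite ge0_fin_numE //; apply: (le_lt_trans Iup); rewrite ltry.
have N0 : (0 < n.+1%:R :> R) by [].
split => //.
- move: Ilo; rewrite -/I -{1}(fineK Ifin) lee_fin ler_pdivrMr; last by rewrite mulr_gt0.
  by rewrite /b => h; rewrite !mulrA in h *.
- move: Iup; rewrite -/I -{1}(fineK Ifin) lee_fin => h.
  have hm : 0 < (1 - eps) * (c * n.+1%:R) by rewrite !mulr_gt0 //; lra.
  apply: (le_trans (ler_wpM2r (ltW hm) h)).
  rewrite mulrDl; apply: lerD.
    by rewrite /b' -mulrA mulVf // gt_eqF.
  by rewrite le_eqVlt; apply/orP; left; apply/eqP; ring.
Qed.
End ana.

Theorem theorem3 (R : realType)
  (d : nat -> measure_display) (Omega : forall n, measurableType (d n))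
  (P : forall n, probability (Omega n) R)
  (X : forall n, 'I_n -> {mfun Omega n >-> R})
  (F f : R -> R) (delta : R) :
  (forall n, mutually_independent (P n) (fun i => (X n i : Omega n -> R))) ->
  (forall n i w, 0 <= X n i w) ->
  (forall n i x, P n [set w | X n i w <= x] = (F x)%:E) ->
  0 < delta ->
  {within `[0, delta], continuous f} ->
  (forall x, x \in `[0, delta] -> f x != 0) ->
  (forall x, x \in `[0, delta] ->
     (F x)%:E = (\int[lebesgue_measure]_(t in `[0%R, x]) (f t)%:E)%E) ->
  (exists2 p : R, 0 < p &
     (\int[lebesgue_measure]_(x in `[0%R, +oo[) ((`|1 - F x| `^ p)%:E) < +oo)%E) ->
  (\forall n \near \oo, (expect_min (P n) (fun i => (X n i : Omega n -> R)) < +oo)%E) /\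
  ((fun n : nat => fine (expect_min (P n) (fun i => (X n i : Omega n -> R)))
       / (1 / (f 0 * n.+1%:R))) @ \oo --> (1 : R)).
Proof.
move=> indep X0 XF d0 cf fnz Fint [p p0 Lp].
have XF1 x : P 1%N [set w | X 1%N ord0 w <= x] = (F x)%:E := XF 1%N ord0 x.
have mset (x : R) : measurable [set w | X 1%N ord0 w <= x].
  have -> : [set w | X 1%N ord0 w <= x] = (X 1%N ord0 : Omega 1%N -> R) @^-1` `]-oo, x].
    by apply/seteqP; split => w /=; rewrite in_itv.
  exact: measurable_funPTI.
have F01 x : 0 <= F x <= 1.
  have h1 : (0 <= (F x)%:E)%E by rewrite -XF1; exact: measure_ge0.
  have h2 : ((F x)%:E <= 1)%E by rewrite -XF1; exact: probability_le1.
  by rewrite !lee_fin in h1 h2; rewrite h1 h2.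
have Fm : {homo F : x y / x <= y}.
  move=> x y xy; rewrite -lee_fin -!XF1; apply: le_measure; rewrite ?inE; try exact: mset.
  by move=> w /= h; apply: le_trans h xy.
have Floc := F_local F f delta d0 cf Fint.
have c0 : 0 < f 0.
  have fz : f 0 != 0 by apply: fnz; rewrite in_itv /= lexx ltW.
  case: (ltgtP (f 0) 0) fz => // cneg _.
  have [eta /andP [eta0 _] H] := Floc (- f 0 / 2) ltac:(lra).
  have := H eta; rewrite (ltW eta0) lexx /= => /(_ isT) /andP [_ h].
  have := F01 eta; nra.
pose k := (Num.trunc p).+1.
have pk : p <= k%:R by exact/ltW/truncnS_gt.
have k0 : (0 < k)%N by [].
set Jp := (\int[lebesgue_measure]_(x in `[0%R, +oo[) ((`|1 - F x| `^ p)%:E))%E.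
have bnd := @I_bounds R F (f 0) delta p k Jp F01 Fm c0 Floc p0 pk k0 (erefl Jp) Lp.
have EI n : (0 < n)%N -> expect_min (P n) (fun i => X n i : Omega n -> R) =
    (\int[lebesgue_measure]_(x in `[0%R, +oo[) ((1 - F x) ^+ n)%:E)%E.
  by move=> n0; apply: expect_min_ccdf => //; exact: XF.
split.
  have [q [r [_ _ H]]] := bnd (1/2) ltac:(apply/andP; split; lra).
  near=> n.
  have kn : (k <= n)%N by near: n; exact: nbhs_infty_ge.
  rewrite EI; last exact: leq_trans kn.
  have [Ifin _ _] := H n kn.
  move: Ifin; rewrite ge0_fin_numE //.
  by apply: integral_ge0 => x _; rewrite lee_fin; apply: exprn_ge0; have := F01 x; lra.
apply/cvgrPdist_le => e e0.
pose eps := Num.min (1/2) (e / 4).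
have eps0 : 0 < eps <= 1/2.
  apply/andP; split; first by rewrite lt_min; apply/andP; split; lra.
  by rewrite ge_min lexx.
have epse : eps <= e / 4 by rewrite ge_min lexx orbT.
have [q [r [/andP [q0 q1] /andP [r0 r1] H]]] := bnd eps eps0.
set J := fine Jp.
have J0 : 0 <= J.
  by apply: fine_ge0; apply: integral_ge0 => x _; rewrite lee_fin powR_ge0.
have q1' : `|q| < 1 by rewrite ger0_norm.
have e40 : 0 < e / 4 by lra.
have Hq := (cvgrPdist_le _ _).1 (cvg_expr q1') (e / 4) e40.
have cJ0 : 0 < f 0 * J + 1 by have := mulr_ge0 (ltW c0) J0; lra.
have e2 : 0 < e / 2 / (f 0 * J + 1) by rewrite divr_gt0 //; lra.
have r01 : 0 < r < 1 by rewrite r0 r1.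
have Hr := @nexpr_near R r k _ r01 e2.
near=> n.
have kn : (k <= n)%N by near: n; exact: nbhs_infty_ge.
have hq : `|0 - q ^+ n| <= e / 4 by near: n; exact: Hq.
have hr : n.+1%:R * r ^+ (n - k) <= e / 2 / (f 0 * J + 1) by near: n; exact: Hr.
have [Ifin Hlo Hhi] := H n kn.
rewrite /= EI; last exact: leq_trans kn.
apply: (@final_arith R _ (f 0 * n.+1%:R) e eps (q ^+ n.+1)
   (r ^+ (n - k) * J * (f 0 * n.+1%:R))) => //.
- by rewrite mulr_gt0.
- apply/andP; split; first by apply: exprn_ge0.
  move: hq; rewrite sub0r normrN ger0_norm; last exact: exprn_ge0.
  apply: le_trans; rewrite exprS; apply: ler_piMl; [exact: exprn_ge0|exact: ltW].
- have rk0 : 0 <= r ^+ (n - k) by apply: exprn_ge0; exact: ltW.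
  apply/andP; split; first by rewrite !mulr_ge0 // ltW.
  have -> : r ^+ (n - k) * J * (f 0 * n.+1%:R) = (n.+1%:R * r ^+ (n - k)) * (f 0 * J) by ring.
  have fJ : 0 <= f 0 * J by rewrite mulr_ge0 // ltW.
  apply: (le_trans (ler_wpM2r fJ hr)).
  have h : f 0 * J / (f 0 * J + 1) <= 1 by rewrite ler_pdivrMr // mul1r; lra.
  have -> : e / 2 / (f 0 * J + 1) * (f 0 * J) = e / 2 * (f 0 * J / (f 0 * J + 1)).
    by field; rewrite gt_eqF.
  rewrite -[X in _ <= X]mulr1; apply: ler_wpM2l => //; lra.
Unshelve. all: end_near.
Qed.
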